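(* If $\mathcal I$ is a P-ideal on $\omega$, then $\mathrm{add}_\omega(\mathcal I)=\mathrm{add}^*(\mathcal I)$.
   Context: An ideal on $\omega$ is a family $\mathcal I\subseteq\mathcal P(\omega)$ closed under finite unions and subsets, containing all finite sets, with $\omega\notin\mathcal I$. $\mathcal I$ is a P-ideal if for every countable $\mathcal A\subseteq\mathcal I$ there is $B\in\mathcal I$ with $A\setminus B$ finite for all $A\in\mathcal A$. With the convention $\min\emptyset=\infty$: $\mathrm{add}_\omega(\mathcal I)=\min\{|\mathcal A|:\mathcal A\subseteq\mathcal I$ and for every sequence $(B_n)\in\mathcal I^\omega$ there is $A\in\mathcal A$ with $A\not\subseteq B_n$ for all $n\}$; $\mathrm{add}^*(\mathcal I)=\min\{|\mathcal A|:\mathcal A\subseteq\mathcal I$ and for every $B\in\mathcal I$ there is $A\in\mathcal A$ with $A\setminus B$ infinite$\}$. *)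

(* Defs.v *)
From mathcomp Require Import all_boot.
From mathcomp Require Import boolp classical_sets cardinality.
Set Implicit Arguments. Unset Strict Implicit. Unset Printing Implicit Defensive.
Local Open Scope classical_set_scope.

Definition ideal (I : set (set nat)) : Prop :=
  (forall A B, I A -> I B -> I (A `|` B)) /\
  (forall A B, B `<=` A -> I A -> I B) /\
  (forall A : set nat, finite_set A -> I A) /\
  ~ I [set: nat].

Definition P_ideal (I : set (set nat)) : Prop :=
  ideal I /\
  forall F : set (set nat), countable F -> F `<=` I ->
    exists2 B, I B & forall A, F A -> finite_set (A `\` B).

Definition add_omega_family (I : set (set nat)) (F : set (set nat)) : Prop :=
  F `<=` I /\
  forall B : nat -> set nat, (forall n, I (B n)) ->
    exists2 A, F A & forall n, ~ (A `<=` B n).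

Definition add_star_family (I : set (set nat)) (F : set (set nat)) : Prop :=
  F `<=` I /\
  forall B, I B -> exists2 A, F A & infinite_set (A `\` B).

(* min{|F| : W F} <= min{|F| : W' F}, with min of the empty class = infinity:
   every W'-family F' has a W-family of cardinality at most |F'|. *)
Definition min_card_le (W W' : set (set nat) -> Prop) : Prop :=
  forall F', W' F' -> exists2 F, W F & card_le F F'.

Definition min_card_eq (W W' : set (set nat) -> Prop) : Prop :=
  min_card_le W W' /\ min_card_le W' W.

(* Main.v *)
Require Import Defs.
From mathcomp Require Import all_boot.
From mathcomp Require Import boolp classical_sets cardinality.
Local Open Scope classical_set_scope.

Lemma bounded_infinite (A : set nat) :
  (forall n, ~ (A `<=` `I_n)) -> infinite_set A.
Proof.
move=> H /finite_seqP [s As]; apply: (H (\sum_(i <- s) i).+1).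
rewrite As => x /= xs; rewrite ltnS.
rewrite (big_rem x xs) /=; exact: leq_addr.
Qed.

Theorem proposition5p7 (I : set (set nat)) :
  P_ideal I -> min_card_eq (add_omega_family I) (add_star_family I).
Proof.
move=> [[IU [IS [IF InT]]] IP]; split.
- move=> F [FI HF]; exists F => //; split => // B IB.
  have cB : countable (range B) by apply: card_image_le.
  have [C IC HC] := IP _ cB (fun _ h => match h with ex_intro2 n _ e => eq_ind _ I (IB n) _ e end).
  have [A FA AC] := HF C IC; exists A => // n AB.
  apply: AC; apply: sub_finite_set (HC (B n) (ex_intro2 _ _ n Logic.I erefl)).
  by move=> x [/AB ? ?].
- move=> F [FI HF]; exists F => //; split => // B IB.
  have [A FA AB] := HF (fun n => B `|` `I_n) (fun n => IU _ _ IB (IF _ (finite_II n))).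
  exists A => //; apply: bounded_infinite => n sub; apply: (AB n) => x Ax.
  by case: (pselect (B x)) => [?|nB]; [left|right; apply: sub].
Qed.
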